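(* Let $n\ge 2$ be an integer and write $n=\sum_{i=r}^{k}a_i2^i$ with $a_r,a_{r+1},\dots,a_k\in\{0,1\}$ and $a_r=a_k=1$. (i) If $n$ is odd, then a permutation in $S_n$ of type $x(n)$ is an odd permutation if and only if $\sum_{i=1}^{k}a_i\equiv 1\pmod 2$. (ii) If $n$ is even, then a permutation of type $x(n)$ and a permutation of type $y(n)$ are both odd permutations if and only if $\sum_{i=r}^{k}a_i\equiv 1\pmod 2$ and $r\geq 2$ is even.
   Context: The type of a permutation is the partition of $n$ given by the lengths of the cycles (including fixed points) in its disjoint cycle decomposition. If $n=\sum_{i=1}^{t}2^{n_i}$ with $0\le n_1<n_2<\dots<n_t$ is the binary expansion of $n$, then $x(n)$ is the partition $(2^{n_t},\dots,2^{n_1})$. If $n$ is even and $n-2=\sum_{i=1}^{\ell}2^{m_i}$ with $0<m_1<\dots<m_\ell$ is the binary expansion of $n-2$, then $y(n)$ is the partition $(2^{m_\ell},\dots,2^{m_1},1,1)$. *)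

(* Defs.v *)
From mathcomp Require Import all_boot all_fingroup.
Set Implicit Arguments. Unset Strict Implicit. Unset Printing Implicit Defensive.

Definition bit (n i : nat) : bool := odd (n %/ 2 ^ i).

Definition cycle_type (n : nat) (s : 'S_n) : seq nat :=
  sort geq [seq #|(X : {set 'I_n})| | X <- enum (porbits s)].

Definition xpart (n : nat) : seq nat :=
  [seq 2 ^ i | i <- rev (iota 0 (trunc_log 2 n).+1) & bit n i].

Definition ypart (n : nat) : seq nat := xpart (n - 2) ++ [:: 1; 1].

(* Main.v *)
Require Import Defs.
From mathcomp Require Import all_boot all_fingroup.
From mathcomp Require Import zify.

Definition pc (m : nat) := \sum_(0 <= i < m) bit m i.

Lemma bit_small m i : m < 2 ^ i -> bit m i = false.
Proof. by move=> h; rewrite /bit divn_small. Qed.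

Lemma sum_ext m K : m < 2 ^ K -> \sum_(0 <= i < K) bit m i = pc m.
Proof.
move=> hK; rewrite /pc.
have gen : forall a b, m < 2 ^ a -> a <= b ->
   \sum_(0 <= i < b) bit m i = \sum_(0 <= i < a) bit m i.
  move=> a b ha; elim: b => [|b IH]; first by rewrite leqn0 => /eqP ->.
  rewrite leq_eqVlt => /orP [/eqP -> //| hb].
  rewrite big_nat_recr //= IH // bit_small ?addn0 //.
  apply: (leq_trans ha); rewrite leq_exp2l //.
have hm : m < 2 ^ m by apply: ltn_expl.
case: (leqP K m) => h.
  by rewrite (gen K m).
by rewrite (gen m K) // ltnW.
Qed.

Lemma pc_rec m (b : bool) : pc (m.*2 + b) = b + pc m.
Proof.
rewrite -(@sum_ext _ m.+2); last first.
  have := ltn_expl m (isT : 1 < 2); rewrite !expnS; case: b => /=; lia.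
rewrite -(@sum_ext m m.+1); last by rewrite ltnW // ltn_expl.
rewrite big_nat_recl // {1}/bit expn0 divn1 oddD odd_double addFb.
congr (_ + _); first by case: b.
apply: eq_bigr => i _; rewrite /bit expnS divnMA.
congr odd; congr (_ %/ _).
case: b => /=; rewrite -mul2n ?addn0 ?mulKn // mulnC divnMDl // divn_small // addn0 //.
Qed.

Lemma pc0 : pc 0 = 0.
Proof. by rewrite /pc big_geq. Qed.

Lemma pc_double m : pc m.*2 = pc m.
Proof. by have := pc_rec m false; rewrite addn0. Qed.

Lemma pc_oddS m : pc m.*2.+1 = (pc m).+1.
Proof. by have := pc_rec m true; rewrite addn1. Qed.

Lemma pc_odd q : odd q -> pc q = (pc q./2).+1.
Proof. by move=> hq; rewrite -[in LHS](odd_double_half q) hq add1n pc_oddS. Qed.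

Lemma pc_pow j q : pc (2 ^ j * q) = pc q.
Proof. by elim: j => [|j IH]; rewrite ?mul1n // expnS -mulnA mul2n pc_double. Qed.

Lemma pc_sub1 j q : odd q -> pc (2 ^ j * q - 1) = pc q - 1 + j.
Proof.
move=> hq; have hpc := pc_odd q hq.
have q0 : 0 < q by move: hq; case: (q).
elim: j => [|j IH].
  rewrite mul1n -[in LHS](odd_double_half q) hq add1n subn1 /= hpc pc_double; lia.
have h : 2 ^ j.+1 * q - 1 = (2 ^ j * q - 1).*2.+1.
  have : 0 < 2 ^ j * q by rewrite muln_gt0 expn_gt0.
  rewrite expnS -mulnA; lia.
rewrite h pc_oddS IH; lia.
Qed.

Lemma size_xpart m : size (xpart m) = pc m.
Proof.
rewrite /xpart size_map size_filter count_rev.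
rewrite -(@sum_ext m (trunc_log 2 m).+1); last exact: trunc_log_ltn.
rewrite -sum1_count /index_iota subn0 big_mkcond /=.
by apply: eq_bigr => i _; case: (bit m i).
Qed.

Lemma size_ct n (s : 'S_n) : size (cycle_type s) = #|porbits s|.
Proof. by rewrite /cycle_type size_sort size_map -cardE. Qed.

Lemma oddpE n (s : 'S_n) : odd_perm s = odd n (+) odd (size (cycle_type s)).
Proof. by rewrite size_ct /odd_perm card_ord. Qed.

Lemma bit0 n : bit n 0 = odd n.
Proof. by rewrite /bit expn0 divn1. Qed.

Theorem lemma4p4 (n : nat) (hn : 2 <= n) :
  (odd n ->
     forall s : 'S_n, cycle_type s = xpart n ->
       (odd_perm s <-> odd (\sum_(1 <= i < (trunc_log 2 n).+1) bit n i)))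
  /\
  (~~ odd n ->
     forall s t : 'S_n, cycle_type s = xpart n -> cycle_type t = ypart n ->
       ((odd_perm s /\ odd_perm t) <->
        (odd (\sum_(logn 2 n <= i < (trunc_log 2 n).+1) bit n i)
         /\ 2 <= logn 2 n /\ ~~ odd (logn 2 n)))).
Proof.
have hk : n < 2 ^ (trunc_log 2 n).+1 by exact: trunc_log_ltn.
split.
  move=> hodd s hs; rewrite oddpE hs size_xpart -(@sum_ext n _ hk).
  rewrite big_ltn // bit0 hodd oddD /=.
  by case: (odd _).
move=> hev s t hs ht.
set r := logn 2 n; set q := n %/ 2 ^ r.
have n0 : 0 < n by case: (n) hn.
have hnq : n = 2 ^ r * q by rewrite mulnC divnK // pfactor_dvdnn.
have hq : odd q.
  apply/negPn/negP; rewrite -dvdn2 => h2.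
  have : 2 ^ r.+1 %| n by rewrite hnq expnS (mulnC 2) dvdn_pmul2l ?expn_gt0.
  by rewrite pfactor_dvdn // ltnn.
have r1 : 1 <= r.
  by rewrite -(pfactor_dvdn 1 (pdiv_prime (isT : 1 < 2))) //= expn1 dvdn2.
have hrk : r <= (trunc_log 2 n).+1.
  apply: ltnW; rewrite -(ltn_exp2l _ _ (isT : 1 < 2)).
  by apply: leq_ltn_trans hk; rewrite hnq leq_pmulr // ; case: (q) hq.
rewrite oddpE hs size_xpart oddpE ht size_cat size_xpart /= (negbTE hev) /=.
have hS : \sum_(r <= i < (trunc_log 2 n).+1) bit n i = pc q.
  rewrite -(pc_pow r) -hnq -(@sum_ext n _ hk) (@big_cat_nat _ _ _ r 0) //=.
  rewrite [\sum_(0 <= i < r) _]big1_seq ?add0n //.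
  move=> i /andP [_]; rewrite mem_index_iota => /andP [_ hi].
  rewrite /bit hnq -(subnKC (ltnW hi)) expnD -mulnA mulKn ?expn_gt0 //.
  have : r - i != 0 by rewrite subn_eq0 -ltnNge.
  by rewrite oddM oddX /= => /negbTE ->.
rewrite hS hnq pc_pow.
have -> : 2 ^ r * q - 2 = (2 ^ (r - 1) * q - 1).*2.
  rewrite -(subnKC r1) expnS -mulnA; have : 0 < 2 ^ (r - 1) * q.
    by rewrite muln_gt0 expn_gt0 /=; case: (q) hq.
  rewrite addKn; lia.
rewrite pc_double pc_sub1 //.
have : 0 < pc q by rewrite pc_odd.
case: (pc q) => // p _; move: r1; case: (r) => // r' _.
have -> : p.+1 - 1 + (r'.+1 - 1) + 2 = (p + r').+2 by lia.
rewrite /= !negbK oddD.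
case: r' => [|r'] /=; case: (odd p) => /=.
all: try (by split => //; case).
all: try (by case: (odd r') => /=; split => //; case => //).
all: by split; [case | case => _ []].
Qed.
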